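(* Let $\mathcal{M}=\langle M,\circ_M,e_M\rangle$ and $\mathcal{N}=\langle N,\circ_N,e_N\rangle$ be mge monoids. Then the Cartesian product $\mathcal{M}\times\mathcal{N}$ (with componentwise operation and unit $\langle e_M,e_N\rangle$) is an mge monoid.
   Context: In a monoid $\langle M,\circ,e\rangle$, a tuple $\langle m_1,\dots,m_n\rangle\in M^n$ is equalizable if there is $\langle x_1,\dots,x_n\rangle\in M^n$ (an equalizer) with $m_1x_1=\dots=m_nx_n$; an equalizer is a most general equalizer (mge) if every equalizer has the form $\langle x_1x,\dots,x_nx\rangle$ for some $x\in M$. An mge monoid is a monoid with right cancellation ($ac=bc\Rightarrow a=b$) in which every equalizable pair has an mge. *)

(* Defs.v *)
Definition is_monoid {M : Type} (op : M -> M -> M) (e : M) : Prop :=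
  (forall a b c, op a (op b c) = op (op a b) c) /\
  (forall a, op e a = a) /\ (forall a, op a e = a).

Definition right_cancellative {M : Type} (op : M -> M -> M) : Prop :=
  forall a b c, op a c = op b c -> a = b.

Definition is_equalizer {M : Type} (op : M -> M -> M) (m1 m2 x1 x2 : M) : Prop :=
  op m1 x1 = op m2 x2.

Definition equalizable {M : Type} (op : M -> M -> M) (m1 m2 : M) : Prop :=
  exists x1 x2, is_equalizer op m1 m2 x1 x2.

Definition is_mge {M : Type} (op : M -> M -> M) (m1 m2 x1 x2 : M) : Prop :=
  is_equalizer op m1 m2 x1 x2 /\
  forall y1 y2, is_equalizer op m1 m2 y1 y2 ->
    exists x, y1 = op x1 x /\ y2 = op x2 x.

Definition mge_monoid {M : Type} (op : M -> M -> M) (e : M) : Prop :=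
  is_monoid op e /\ right_cancellative op /\
  forall m1 m2, equalizable op m1 m2 -> exists x1 x2, is_mge op m1 m2 x1 x2.

Definition prod_op {M N : Type} (opM : M -> M -> M) (opN : N -> N -> N)
  (a b : M * N) : M * N := (opM (fst a) (fst b), opN (snd a) (snd b)).

(* Main.v *)
Require Import Defs.

Theorem lemma1 (M N : Type) (opM : M -> M -> M) (eM : M)
  (opN : N -> N -> N) (eN : N) :
  mge_monoid opM eM -> mge_monoid opN eN ->
  mge_monoid (prod_op opM opN) (eM, eN).
Proof.
  intros [[AM [LM RM]] [CM GM]] [[AN [LN RN]] [CN GN]].
  unfold mge_monoid, is_monoid, right_cancellative, prod_op.
  split; [|split].
  - split; [|split].
    + intros [a1 a2] [b1 b2] [c1 c2]; simpl; rewrite AM, AN; reflexivity.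
    + intros [a1 a2]; simpl; rewrite LM, LN; reflexivity.
    + intros [a1 a2]; simpl; rewrite RM, RN; reflexivity.
  - intros [a1 a2] [b1 b2] [c1 c2]; simpl; intros H.
    injection H as H1 H2. rewrite (CM _ _ _ H1), (CN _ _ _ H2). reflexivity.
  - intros [m1 n1] [m2 n2] [[x1 y1] [[x2 y2] E]].
    unfold is_equalizer, prod_op in E; simpl in E; injection E as E1 E2.
    destruct (GM m1 m2 (ex_intro _ x1 (ex_intro _ x2 E1))) as [a1 [a2 [Ha Hma]]].
    destruct (GN n1 n2 (ex_intro _ y1 (ex_intro _ y2 E2))) as [b1 [b2 [Hb Hmb]]].
    exists (a1, b1), (a2, b2). split.
    + unfold is_equalizer, prod_op in *; simpl; rewrite Ha, Hb; reflexivity.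
    + intros [z1 w1] [z2 w2] F.
      unfold is_equalizer, prod_op in F; simpl in F; injection F as F1 F2.
      destruct (Hma z1 z2 F1) as [x [Hx1 Hx2]].
      destruct (Hmb w1 w2 F2) as [y [Hy1 Hy2]].
      exists (x, y); simpl. rewrite Hx1, Hx2, Hy1, Hy2. split; reflexivity.
Qed.
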